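(* Let $n\ge 2$ and $d\ge 2$, and let $|\psi\rangle,|\varphi\rangle\in(\mathbb{C}^d)^{\otimes n}$ be permutation-symmetric states. Suppose there exist invertible $d\times d$ complex matrices $A_1,\ldots,A_n$ such that $$A_1\otimes A_2\otimes\cdots\otimes A_n|\psi\rangle=|\varphi\rangle.$$ Then there exists an invertible $d\times d$ matrix $A$ such that $$A\otimes A\otimes\cdots\otimes A\,|\psi\rangle=|\varphi\rangle$$ ($n$ factors). Moreover, if $A_1,\ldots,A_n$ are all unitary, then $A$ can be chosen unitary.
   Context: A state $|\psi\rangle\in(\mathbb{C}^d)^{\otimes n}$ is permutation-symmetric if $P_\sigma|\psi\rangle=|\psi\rangle$ for every permutation $\sigma$ of $\{1,\ldots,n\}$, where $P_\sigma|i_1 i_2\cdots i_n\rangle=|i_{\sigma(1)}i_{\sigma(2)}\cdots i_{\sigma(n)}\rangle$ on computational basis vectors. *)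

(* Defs.v *)
From mathcomp Require Import all_boot all_algebra all_fingroup.
From mathcomp Require Import complex Rstruct.
Set Implicit Arguments.
Unset Strict Implicit.
Unset Printing Implicit Defensive.
Import GRing.Theory Num.Theory.
Local Open Scope ring_scope.

Definition C : numClosedFieldType := (Rdefinitions.R)[i].

(* Computational basis labels of (C^d)^{⊗n}: maps 'I_n -> 'I_d,
   i.e. the multi-index (i_1,...,i_n). *)
Definition basis_idx (n d : nat) := {ffun 'I_n -> 'I_d}.

(* A vector of (C^d)^{⊗n}, given by its coordinates in the computational basis. *)
Definition tensor (n d : nat) := {ffun basis_idx n d -> C}.

(* Permutation operator P_sigma : |i_1..i_n> |-> |i_sigma(1) .. i_sigma(n)>.
   Its action on coordinates: (P_sigma psi)(j) = psi(j o sigma^-1). *)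
Definition perm_op (n d : nat) (s : 'S_n) (psi : tensor n d) : tensor n d :=
  [ffun j : basis_idx n d => psi [ffun k => j ((s^-1)%g k)]].

Definition perm_symmetric (n d : nat) (psi : tensor n d) : Prop :=
  forall s : 'S_n, perm_op s psi = psi.

Definition is_state (n d : nat) (psi : tensor n d) : Prop :=
  \sum_(i : basis_idx n d) `|psi i| ^+ 2 = 1.

Definition tensor_op (n d : nat) (As : 'I_n -> 'M[C]_d) (psi : tensor n d)
  : tensor n d :=
  [ffun i : basis_idx n d =>
     \sum_(j : basis_idx n d) (\prod_(k < n) As k (i k) (j k)) * psi j].

Definition unitary (d : nat) (A : 'M[C]_d) : Prop :=
  A *m (map_mx Num.conj A)^T = 1%:M.

(* Main.v *)
Require Import Defs.
From mathcomp Require Import all_boot all_algebra all_fingroup.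
From mathcomp Require Import complex Rstruct.
From mathcomp Require Import ring spectral sesquilinear.
Import GRing.Theory Num.Theory.
Local Open Scope ring_scope.
Set Implicit Arguments. Unset Strict Implicit.

Lemma tensor_op_ext n d (As Bs : 'I_n -> 'M[C]_d) psi :
  (forall k, As k = Bs k) -> tensor_op As psi = tensor_op Bs psi.
Proof.
move=> h; apply/ffunP=> i; rewrite !ffunE; apply: eq_bigr => j _.
by congr (_ * _); apply: eq_bigr => k _; rewrite h.
Qed.

Lemma tensor_op1 n d (psi : tensor n d) :
  tensor_op (fun _ => 1%:M) psi = psi.
Proof.
apply/ffunP=> i; rewrite ffunE (bigD1 i) //= [X in _ + X]big1 => [|j hj].
  by rewrite big1 ?mul1r ?addr0 // => k _; rewrite mxE eqxx.
have [k hk] : exists k, i k != j k.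
  apply/existsP; apply: contraR hj; rewrite negb_exists => /forallP h.
  by apply/eqP/ffunP => k; have := h k; rewrite negbK => /eqP.
by rewrite (bigD1 k) //= mxE (negbTE hk) mul0r mul0r.
Qed.

Lemma tensor_op_comp n d (As Bs : 'I_n -> 'M[C]_d) psi :
  tensor_op As (tensor_op Bs psi) = tensor_op (fun k => As k *m Bs k) psi.
Proof.
apply/ffunP=> i; rewrite !ffunE.
under eq_bigr do rewrite ffunE big_distrr.
rewrite exchange_big; apply: eq_bigr => l _ /=.
under eq_bigr do rewrite mulrA.
rewrite -big_distrl /=; congr (_ * _).
under [RHS]eq_bigr do rewrite mxE.
rewrite bigA_distr_bigA /=; apply: eq_bigr => f _.
by rewrite -big_split.
Qed.

Lemma tensor_op_comp2 n d (As Bs Cs : 'I_n -> 'M[C]_d) psi :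
  (forall k, As k *m Bs k = Cs k) ->
  tensor_op As (tensor_op Bs psi) = tensor_op Cs psi.
Proof. by move=> h; rewrite tensor_op_comp; apply: tensor_op_ext. Qed.

Lemma perm_op_tensor n d (s : 'S_n) (As : 'I_n -> 'M[C]_d) psi :
  perm_op s (tensor_op As psi) = tensor_op (fun k => As (s k)) (perm_op s psi).
Proof.
apply/ffunP=> j; rewrite !ffunE.
rewrite (reindex (fun l : basis_idx n d => [ffun k => l ((s^-1)%g k)])) /=; last first.
  exists (fun l : basis_idx n d => [ffun k => l (s k)]) => l _;
  by apply/ffunP => k; rewrite !ffunE ?permK ?permKV.
apply: eq_bigr => l _; rewrite !ffunE; congr (_ * _).
rewrite (reindex_inj (@perm_inj _ s)) /=; apply: eq_bigr => k _.
by rewrite !ffunE permK.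
Qed.

Definition slotn n d (m : nat) (M : 'M[C]_d) : 'I_n -> 'M[C]_d :=
  fun l => if (l : nat) == m then M else 1%:M.
Arguments slotn {n d}.

Lemma prod_slot n d m (hm : (m < n)%N) (X : 'M[C]_d) (i j : basis_idx n d) :
  \prod_(l < n) slotn m X l (i l) (j l) =
  X (i (Ordinal hm)) (j (Ordinal hm)) *
  \prod_(l < n | l != Ordinal hm) (1%:M : 'M[C]_d) (i l) (j l).
Proof.
rewrite (bigD1 (Ordinal hm)) //= /slotn eqxx; congr (_ * _).
by apply: eq_bigr => l hl; rewrite ifF //; apply: contraNF hl => /eqP h; apply/eqP/val_inj.
Qed.

Lemma slot_lin n d m (hm : (m < n)%N) (M : 'M[C]_d) c (psi : tensor n d) :
  tensor_op (slotn m (M + c%:M)) psi = tensor_op (slotn m M) psi + c *: psi.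
Proof.
rewrite -{3}(tensor_op1 psi).
apply/ffunP=> i; rewrite !ffunE.
rewrite scaler_sumr -big_split /=; apply: eq_bigr => j _.
rewrite !(prod_slot hm) [in c *: _](bigD1 (Ordinal hm)) //= !mxE.
rewrite -[c *: _]/(c * _) -mulr_natr; ring.
Qed.

Lemma slot_mul n d m (A B : 'M[C]_d) (l : 'I_n) :
  slotn m A l *m slotn m B l = slotn m (A *m B) l.
Proof. by rewrite /slotn; case: eqP => _ //; rewrite mul1mx. Qed.

Fixpoint prodm d (Ms : nat -> 'M[C]_d) (m : nat) : 'M[C]_d :=
  if m is m'.+1 then Ms m' *m prodm Ms m' else 1%:M.
Arguments prodm {d}.

Lemma slot_gather n d (Ms : nat -> 'M[C]_d) (psi : tensor n d) :
  (forall j, (j < n)%N -> tensor_op (slotn j (Ms j)) psi = tensor_op (slotn 0 (Ms j)) psi) ->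
  (forall j, Ms 0 *m Ms j = Ms j *m Ms 0) ->
  forall m, (m <= n)%N ->
  tensor_op (fun l : 'I_n => if (l < m)%N then Ms l else 1%:M) psi =
  tensor_op (slotn 0 (prodm Ms m)) psi.
Proof.
move=> hsw hc; elim=> [|m IH] hm.
  rewrite (tensor_op_ext _ (Bs := fun _ => 1%:M)) ?tensor_op1; last by [].
  by rewrite (tensor_op_ext _ (Bs := fun _ => 1%:M)) ?tensor_op1 // => l; rewrite /slotn; case: eqP.
set F := fun l : 'I_n => if (l < m)%N then Ms l else 1%:M.
rewrite -(tensor_op_comp2 (As := F) (Bs := slotn m (Ms m))); last first.
  move=> l; rewrite /F /slotn ltnS.
  by case: (ltngtP l m) => h; rewrite ?mulmx1 ?mul1mx // h.
rewrite hsw // tensor_op_comp.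
rewrite (tensor_op_ext _ (Bs := fun l => slotn 0 (Ms m) l *m F l)); last first.
  move=> l; rewrite /F /slotn; case: eqP => [->|_]; last by rewrite mulmx1 mul1mx.
  by case: ifP => _; rewrite ?hc ?mulmx1 ?mul1mx.
rewrite -tensor_op_comp IH ?(ltnW hm) // tensor_op_comp.
by apply: tensor_op_ext => l; rewrite slot_mul.
Qed.

Lemma binom_exp (R : comNzRingType) (a b : R) k :
  exists r, (a + b) ^+ k.+1 = a ^+ k.+1 + (k.+1)%:R * a ^+ k * b + b ^+ 2 * r.
Proof.
elim: k => [|k [r hr]]; first by exists 0; rewrite !expr0 expr1 mulr0 addr0 mulr1 mul1r.
exists (a * r + (k.+1)%:R * a ^+ k + b * r).
rewrite exprS hr !exprS -!natr1; ring.
Qed.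

Lemma hensel k (q : {poly C}) : ~~ root q 0 -> exists z : {poly C}, q %| z ^+ k.+1 - 'X.
Proof.
have [s] := ubnP (size q); elim: s q => // s IH q hs hq0.
have [hsz|hsz] := boolP (size q == 1%N).
  have [c hc ->] := size_poly1P _ hsz.
  exists 0; apply/dvdpP; exists (c^-1%:P * (0 ^+ k.+1 - 'X)).
  by rewrite mulrC mulrA -polyCM mulfV // mul1r.
have [l hl] := closed_rootP q hsz.
have [q' hq] := factor_theorem _ _ hl.
have hl0 : l != 0 by apply: contraNneq hq0 => <-.
have hq'0 : ~~ root q' 0 by move: hq0; rewrite hq rootM negb_or => /andP[].
have hq'nz : q' != 0 by apply: contraNneq hq'0 => ->; rewrite root0.
have hsq' : (size q' < s)%N.
  move: hs; rewrite hq size_mul ?polyXsubC_eq0 // size_XsubC addn2 /=.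
  by rewrite ltnS.
have [z' hz'] := IH _ hsq' hq'0.
set e := (z' ^+ k.+1 - 'X) %/ q'.
have he : z' ^+ k.+1 - 'X = e * q' by rewrite /e divpK.
suff [c hc] : exists c, root (e + (k.+1)%:R * z' ^+ k * c%:P +
                       c%:P ^+ 2 * q' * (projT1 (sig_eqW (binom_exp z' (c%:P * q') k)))) l.
  set r := projT1 _ in hc.
  have hr : (z' + c%:P * q') ^+ k.+1 = z' ^+ k.+1 + (k.+1)%:R * z' ^+ k * (c%:P * q') + (c%:P * q') ^+ 2 * r.
    by rewrite /r; case: sig_eqW.
  exists (z' + c%:P * q'); rewrite hr hq.
  have -> : z' ^+ k.+1 + (k.+1)%:R * z' ^+ k * (c%:P * q') + (c%:P * q') ^+ 2 * r - 'X
     = q' * (e + (k.+1)%:R * z' ^+ k * c%:P + c%:P ^+ 2 * q' * r).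
    have -> : z' ^+ k.+1 = e * q' + 'X by rewrite -he subrK.
    ring.
  by apply: dvdp_mul => //; rewrite dvdp_XsubCl.
have hev : z'.[l] ^+ k.+1 - l = e.[l] * q'.[l].
  by have := congr1 (horner^~ l) he; rewrite !(hornerD, hornerN, hornerM, hornerC, hornerX, horner_exp).
have [hq'l|hq'l] := boolP (root q' l).
  move/eqP: (hq'l) => hq'l0.
  have hz'l : z'.[l] != 0.
    apply: contra_neq hl0 => h; move: hev; rewrite hq'l0 mulr0 h expr0n /= sub0r.
    by move/eqP; rewrite oppr_eq0 => /eqP.
  exists (- e.[l] / ((k.+1)%:R * z'.[l] ^+ k)).
  set r := projT1 _; rewrite /root -polyC_natr !(hornerD, hornerN, hornerM, hornerC, hornerX, horner_exp) hq'l0.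
  rewrite mulr0 mul0r addr0.
  apply/eqP; field.
  by rewrite expf_neq0 //= addrC natr1 pnatr_eq0.
exists ((k.+1.-root l - z'.[l]) / q'.[l]).
set c := (_ / _).
set r := projT1 _.
have hr : (z' + c%:P * q') ^+ k.+1 = z' ^+ k.+1 + (k.+1)%:R * z' ^+ k * (c%:P * q') + (c%:P * q') ^+ 2 * r.
  by rewrite /r; case: sig_eqW.
have hzl : (z' + c%:P * q').[l] = k.+1.-root l.
  rewrite !(hornerD, hornerN, hornerM, hornerC, hornerX, horner_exp) /c; field; exact: hq'l.
have hW : (z' + c%:P * q') ^+ k.+1 - 'X
   = q' * (e + (k.+1)%:R * z' ^+ k * c%:P + c%:P ^+ 2 * q' * r).
  rewrite hr; have -> : z' ^+ k.+1 = e * q' + 'X by rewrite -he subrK.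
  ring.
have := congr1 (horner^~ l) hW.
rewrite hornerD hornerN hornerX horner_exp hzl rootCK // subrr hornerM.
move/esym/eqP; rewrite mulf_eq0 => /orP[h|h] //; by rewrite /root h in hq'l.
Qed.

Lemma mx_root d k (Y : 'M[C]_d.+1) : Y \in unitmx ->
  exists z : {poly C}, horner_mx Y z ^+ k.+1 = Y.
Proof.
move=> hY; have h0 : ~~ root (char_poly Y) 0.
  rewrite /root horner_coef0 char_poly_det mulf_eq0 negb_or signr_eq0 /=.
  by rewrite -unitfE -unitmxE.
have [z hz] := hensel k h0; exists z.
have [r hr] := dvdpP _ _ hz.
have := congr1 (horner_mx Y) hr.
rewrite rmorphM /= Cayley_Hamilton mulr0 rmorphB /= rmorphXn /= horner_mx_X.
by move/eqP; rewrite subr_eq0 => /eqP.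
Qed.

Lemma tensor_slot0 n d m (hm : (m < n)%N) (psi : tensor n d) :
  tensor_op (slotn m 0) psi = 0.
Proof.
apply/ffunP => i; rewrite !ffunE big1 // => j _.
by rewrite (prod_slot hm) mxE !mul0r.
Qed.

Lemma slot_horner n d (Y : 'M[C]_d.+1) (psi : tensor n d.+1) :
  (forall m, (m < n)%N -> tensor_op (slotn m Y) psi = tensor_op (slotn 0 Y) psi) ->
  forall p m, (m < n)%N ->
  tensor_op (slotn m (horner_mx Y p)) psi = tensor_op (slotn 0 (horner_mx Y p)) psi.
Proof.
move=> hY p; elim/poly_ind: p => [|p c IH] m hm.
  by rewrite rmorph0 !tensor_slot0 // (leq_ltn_trans _ hm).
have hn0 : (0 < n)%N by apply: leq_ltn_trans hm.
rewrite rmorphD rmorphM /= horner_mx_X horner_mx_C !slot_lin //; congr (_ + _).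
set Q := horner_mx Y p.
have [->|m0] := eqVneq m 0%N; first by [].
rewrite -(tensor_op_comp2 (As := slotn m Q) (Bs := slotn m Y)); last by move=> l; rewrite slot_mul mulmxE.
rewrite hY // tensor_op_comp.
rewrite (tensor_op_ext _ (Bs := fun l => slotn 0 Y l *m slotn m Q l)); last first.
  move=> l; rewrite /slotn; case: eqP => [->|_]; last by rewrite mulmx1 mul1mx.
  by rewrite (negbTE m0) mulmx1 mul1mx.
rewrite -tensor_op_comp IH // tensor_op_comp.
apply: tensor_op_ext => l; rewrite slot_mul.
have hc : comm_mx Y Q by apply: comm_mx_horner.
by rewrite hc mulmxE.
Qed.

Lemma horner_conj d (P M : 'M[C]_d.+1) p : P \in unitmx ->
  horner_mx (invmx P *m M *m P) p = invmx P *m horner_mx M p *m P.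
Proof.
move=> hP; elim/poly_ind: p => [|p c IH].
  by rewrite !rmorph0 mulmx0 mul0mx.
rewrite !rmorphD !rmorphM /= !horner_mx_X !horner_mx_C IH -!mulmxE.
rewrite mulmxDr mulmxDl; congr (_ + _).
  rewrite !mulmxA.
  by rewrite mulmxK.
by rewrite mul_mx_scalar -scalemxAl mulVmx // scalemx1.
Qed.

Lemma conj_inj d (P A B : 'M[C]_d.+1) : P \in unitmx ->
  invmx P *m A *m P = invmx P *m B *m P -> A = B.
Proof.
move=> hP h; have := congr1 (fun X => P *m X *m invmx P) h.
by rewrite !mulmxA !mulmxV // !mul1mx !mulmxK.
Qed.

Lemma unitaryE d (A : 'M[C]_d) : unitary A <-> A \is unitarymx.
Proof. by rewrite /unitary map_trmx; split => [h|/unitarymxP//]; apply/unitarymxP. Qed.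

Local Open Scope sesquilinear_scope.

Lemma diag_unitary d (D : 'rV[C]_d) :
  (diag_mx D \is unitarymx) = [forall i, D 0 i * (D 0 i)^* == 1].
Proof.
apply/unitarymxP/forallP => [h i|h].
  have := congr1 (fun M : 'M[C]_d => M i i) h; rewrite /= tr_diag_mx map_diag_mx mulmx_diag.
  by rewrite !mxE eqxx /= !mulr1n => ->.
rewrite tr_diag_mx map_diag_mx mulmx_diag; apply/matrixP => i j; rewrite !mxE.
by rewrite (eqP (h i)).
Qed.


Local Open Scope sesquilinear_scope.

Lemma root_unitary d k (Y : 'M[C]_d.+1) z :
  Y \is unitarymx -> horner_mx Y z ^+ k.+1 = Y -> horner_mx Y z \is unitarymx.
Proof.
move=> hU hz.
have hYu := unitarymx_unit hU.
have hN : Y \is normalmx.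
  apply/normalmxP; rewrite (unitarymxP hU) -invmx_unitary //.
  by rewrite mulVmx.
have hY := orthomx_spectralP hN.
set P := spectralmx Y in hY; set D := spectral_diag Y in hY.
have hPu : P \is unitarymx by apply: spectral_unitarymx.
have hP : P \in unitmx by apply: unitarymx_unit.
have hZ : horner_mx Y z = invmx P *m diag_mx (map_mx (horner z) D) *m P.
  by rewrite [in LHS]hY horner_conj // horner_mx_diag.
have hDu : diag_mx D \is unitarymx.
  have -> : diag_mx D = P *m Y *m invmx P.
    by rewrite hY !mulmxA mulmxV // mul1mx mulmxK.
  by rewrite !mul_unitarymx // invmx_unitary // trmxC_unitary.
have hw : forall i, (z.[D 0 i]) ^+ k.+1 = D 0 i.
  move=> i.
  have h1 : horner_mx Y (z ^+ k.+1) = Y by rewrite rmorphXn.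
  rewrite [in LHS]hY horner_conj // horner_mx_diag in h1.
  have := conj_inj hP (etrans h1 hY).
  by move/(congr1 (fun M : 'M[C]_d.+1 => M i i)); rewrite !mxE eqxx /= !mulr1n horner_exp.
rewrite hZ.
apply: (mul_unitarymx _ hPu).
apply: mul_unitarymx.
  rewrite (invmx_unitary hPu) trmxC_unitary; exact: hPu.
rewrite diag_unitary; apply/forallP => i; rewrite mxE.
move: hDu; rewrite diag_unitary => /forallP/(_ i) /eqP hDi.
have hnD : `|D 0 i| = 1.
  apply/eqP; rewrite -(@pexpr_eq1 _ _ 2) //.
  by rewrite normCK hDi.
have hnw : `|z.[D 0 i]| = 1.
  apply/eqP; rewrite -(@pexpr_eq1 _ _ k.+1) //.
  by rewrite -normrX hw hnD.
by rewrite -normCK hnw expr1n.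
Qed.

Lemma prodm_const d (Z : 'M[C]_d.+1) m : prodm (fun _ => Z) m = Z ^+ m.
Proof. by elim: m => [|m IH] //=; rewrite IH exprS mulmxE. Qed.

Lemma prodm_unit d (Ms : nat -> 'M[C]_d) m :
  (forall j, Ms j \in unitmx) -> prodm Ms m \in unitmx.
Proof.
by move=> h; elim: m => [|m IH] /=; rewrite ?unitmx1 // unitmx_mul h IH.
Qed.

Lemma unitarymx1 d : (1%:M : 'M[C]_d) \is unitarymx.
Proof. by apply/unitarymxP; rewrite trmx1 map_mx1 mulmx1. Qed.

Lemma prodm_unitary d (Ms : nat -> 'M[C]_d) m :
  (forall j, Ms j \is unitarymx) -> prodm Ms m \is unitarymx.
Proof.
move=> h; elim: m => [|m IH] /=; first exact: unitarymx1.
exact: mul_unitarymx.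
Qed.

Local Close Scope sesquilinear_scope.
Unset Implicit Arguments.
Theorem theorem1 (n d : nat) (hn : (2 <= n)%N) (hd : (2 <= d)%N)
  (psi phi : tensor n d)
  (hpsi : is_state psi) (hphi : is_state phi)
  (spsi : perm_symmetric psi) (sphi : perm_symmetric phi)
  (As : 'I_n -> 'M[C]_d)
  (hinv : forall k, As k \in unitmx)
  (hA : tensor_op As psi = phi) :
  (exists A : 'M[C]_d, A \in unitmx /\ tensor_op (fun _ => A) psi = phi) /\
  ((forall k, unitary (As k)) ->
     exists A : 'M[C]_d, unitary A /\ tensor_op (fun _ => A) psi = phi).
Proof.
destruct d as [|d]; first by [].
destruct n as [|n]; first by [].
set A1 := As ord0.
have hA1 : A1 \in unitmx by apply: hinv.
set Ms : nat -> 'M[C]_d.+1 := fun j => if j == 0%N then 1%:M else invmx A1 *m As (inord j).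
have hAs : forall l, As l = A1 *m Ms l.
  move=> l; rewrite /Ms; case: eqP => [h0|h0].
    by rewrite mulmx1 /A1; congr As; apply: val_inj.
  by rewrite inord_val mulKVmx.
have hphi1 : phi = tensor_op (fun _ => A1) (tensor_op (fun l => Ms l) psi).
  by rewrite tensor_op_comp -hA; apply: tensor_op_ext => l; rewrite hAs.
have hsw : forall j, (j < n.+1)%N ->
    tensor_op (slotn j (Ms j)) psi = tensor_op (slotn 0 (Ms j)) psi.
  move=> j hj; have [->|j0] := eqVneq j 0%N; first by [].
  set k : 'I_n.+1 := inord j.
  have hk : (k : nat) = j by rewrite /k inordK.
  have hk0 : k != ord0.
    by apply: contra_neq j0 => hk'; rewrite -hk hk'.
  set t := tperm ord0 k.
  have h1 : tensor_op (fun l => As (t l)) psi = phi.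
    by rewrite -(spsi t) -perm_op_tensor hA sphi.
  have h2 : tensor_op (fun l => invmx (As l) *m As (t l)) psi = psi.
    rewrite -tensor_op_comp h1 -hA tensor_op_comp -[RHS]tensor_op1.
    by apply: tensor_op_ext => l; rewrite mulVmx.
  rewrite -{1}h2 tensor_op_comp; apply: tensor_op_ext => l.
  rewrite /slotn /Ms (negbTE j0) -/k.
  have [->|lk] := eqVneq l k.
    rewrite hk eqxx /= /t tpermR -/A1 (negbTE j0).
    by rewrite mulmxA mulmxK // mulVmx.
  have [->|l0] := eqVneq l ord0.
    rewrite /= eq_sym (negbTE j0).
    by rewrite /t tpermL mul1mx.
  have hlj : ((l : nat) == j) = false.
    by apply/negbTE; apply: contra_neq lk => hh1; apply: val_inj => /=; rewrite hh1 hk.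
  have hl0 : ((l : nat) == 0%N) = false.
    by apply/negbTE; apply: contra_neq l0 => hh2; exact: val_inj.
  rewrite hlj hl0 /t tpermD 1?eq_sym // mul1mx mulVmx //.
have hMs_unit : forall j, Ms j \in unitmx.
  move=> j; rewrite /Ms; case: eqP => _; first exact: unitmx1.
  by rewrite unitmx_mul unitmx_inv hA1 hinv.
set Y := prodm Ms n.+1.
have hYu : Y \in unitmx by apply: prodm_unit.
have hgather : tensor_op (fun l => Ms l) psi = tensor_op (slotn 0 Y) psi.
  rewrite -(slot_gather hsw) //; last by move=> j; rewrite /Ms eqxx mul1mx mulmx1.
  by apply: tensor_op_ext => l; rewrite ltn_ord.
set chi := tensor_op (slotn 0 Y) psi.
have hphi2 : phi = tensor_op (fun _ => A1) chi by rewrite hphi1 hgather.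
have hchi : chi = tensor_op (fun _ => invmx A1) phi.
  by rewrite hphi2 tensor_op_comp -{1}(tensor_op1 chi); apply: tensor_op_ext => l; rewrite mulVmx.
have schi : forall s, perm_op s chi = chi.
  by move=> s; rewrite hchi perm_op_tensor sphi.
have hYs : forall m, (m < n.+1)%N -> tensor_op (slotn m Y) psi = tensor_op (slotn 0 Y) psi.
  move=> m hm; rewrite -/chi -(schi (tperm ord0 (inord m))) /chi perm_op_tensor spsi.
  apply: tensor_op_ext => l; rewrite /slotn.
  congr (if _ then _ else _).
  have e1 : ((tperm ord0 (inord m) l : nat) == 0%N) = (tperm ord0 (inord m) l == ord0) by [].
  by rewrite e1 (canF_eq (tpermK _ _)) tpermL -val_eqE /= inordK.
have [z hz] := mx_root n hYu.
set Z := horner_mx Y z.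
have hZs := slot_horner hYs z.
have hZu : Z \in unitmx.
  have : Z ^+ n.+1 \is a GRing.unit by rewrite hz.
  by rewrite unitrX_pos.
have hfin : tensor_op (fun _ => A1 *m Z) psi = phi.
  rewrite hphi2 -tensor_op_comp; congr tensor_op.
  rewrite -[LHS](tensor_op_ext _ (As := fun l : 'I_n.+1 => if (l < n.+1)%N then Z else 1%:M)); last by move=> l; rewrite ltn_ord.
  rewrite (slot_gather (Ms := fun _ => Z)) //.
    by rewrite prodm_const hz.
split.
  by exists (A1 *m Z); split => //; rewrite unitmx_mul hA1.
move=> hU; exists (A1 *m Z); split => //.
have hU' : forall k, As k \is unitarymx by move=> k; rewrite -unitaryE.
have hA1U : A1 \is unitarymx by apply: hU'.
apply/unitaryE; apply: mul_unitarymx => //.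
apply: (root_unitary (k := n)) => //.
apply: prodm_unitary => j; rewrite /Ms; case: eqP => _; first exact: unitarymx1.
apply: mul_unitarymx => //.
by rewrite invmx_unitary // trmxC_unitary.
Qed.
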